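(* Assume $\min\{d_1,\dots,d_{L-1}\}\ge d_{\min}$. Let $(\bm\sigma,\bm\Pi)\in\mathcal B$ and $(\bm\sigma',\bm\Pi')\in\mathcal B$ be arbitrary. Then (i) $\mathcal W_{(\bm\sigma,\bm\Pi)}=\mathcal W_{(\bm\sigma',\bm\Pi')}$ if and only if $\bm\sigma=\bm\sigma'$; (ii) if $\bm\sigma\ne\bm\sigma'$, then $\mathrm{dist}(\mathcal W_{(\bm\sigma,\bm\Pi)},\mathcal W_{(\bm\sigma',\bm\Pi')})\ge\delta_\sigma$.
   Context: Let $L\ge2$, $d_0,\dots,d_L$ positive integers, $d_{\min}=\min\{d_0,d_L\}$, $\lambda>0$, and $y_1\ge\dots\ge y_{d_{\min}}\ge0$. Let $r_Y$ be the number of positive $y_i$, $p_Y$ the number of distinct positive values, $0=s_0<s_1<\dots<s_{p_Y}=r_Y$ with $y_{s_{k-1}+1}=\dots=y_{s_k}>y_{s_k+1}$ (where $y_j=0$ for $j>r_Y$), $h_k=s_k-s_{k-1}$. $\mathcal O^n$: $n\times n$ orthogonal matrices; $\mathcal P^n$: $n\times n$ permutation matrices; $\mathrm{BlkD}$: block diagonal. Define $\mathcal A=\{\bm a\in\mathbb R^{d_{\min}}: a_i^{2L-1}-\sqrt\lambda y_ia_i^{L-1}+\lambda a_i=0,\ a_i\ge0\ \forall i\}$ and $\mathcal B=\{(\bm\sigma,\bm\Pi)\in\mathbb R^{d_{\min}}\times\mathcal P^{d_{\min}}:\exists\bm a\in\mathcal A,\ \bm\sigma=\bm\Pi\bm a,\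 \sigma_1\ge\dots\ge\sigma_{d_{\min}}\}$. For $(\bm\sigma,\bm\Pi)\in\mathcal B$, let $\bm\Sigma_l\in\mathbb R^{d_l\times d_{l-1}}$ have top-left $d_{\min}\times d_{\min}$ block $\mathrm{diag}(\bm\sigma)$ and zeros elsewhere, and let $\mathcal W_{(\bm\sigma,\bm\Pi)}$ be the set of tuples $\bm W=(\bm W_1,\dots,\bm W_L)$, $\bm W_l\in\mathbb R^{d_l\times d_{l-1}}$, for which there exist $\bm Q_l\in\mathcal O^{d_{l-1}}$ ($l=2,\dots,L$), $\bm O_k\in\mathcal O^{h_k}$ ($k\in[p_Y]$), $\bm O_{p_Y+1}\in\mathcal O^{d_0-r_Y}$, $\widehat{\bm O}_{p_Y+1}\in\mathcal O^{d_L-r_Y}$ with $\bm W_1=\bm Q_2\bm\Sigma_1\mathrm{BlkD}(\bm\Pi,\bm I_{d_0-d_{\min}})\mathrm{BlkD}(\bm O_1,\dots,\bm O_{p_Y+1})$, $\bm W_l=\bm Q_{l+1}\bm\Sigma_l\bm Q_l^T$ for $2\le l\le L-1$, and $\bm W_L=\mathrm{BlkD}(\bm O_1^T,\dots,\bm O_{p_Y}^T,\widehat{\bm O}_{p_Y+1}^T)\mathrm{BlkD}(\bm\Pi^T,\bm I_{d_L-d_{\min}})\bm\Sigma_L\bm Q_L^T$. Let $\mathcal Y=\bigcup_{i\in[d_{\min}]}\{\sigma\ge0:\sigma^{2L-1}+\lambda\sigma-\sqrt\lambda y_i\sigma^{L-1}=0\}$ and $\delta_\sigma=\min\{|x-y|:x\ne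 y\in\mathcal Y\}$. For sets, $\mathrm{dist}(\mathcal X,\mathcal X')=\inf_{\bm W\in\mathcal X,\bm W'\in\mathcal X'}(\sum_l\|\bm W_l-\bm W_l'\|_F^2)^{1/2}$. *)

(* Defs.v *)
From HB Require Import structures.
From mathcomp Require Import all_boot all_order all_algebra.
From mathcomp Require Import boolp classical_sets reals.
Set Implicit Arguments. Unset Strict Implicit. Unset Printing Implicit Defensive.
Import Order.TTheory GRing.Theory Num.Theory.
Local Open Scope ring_scope.
Local Open Scope classical_set_scope.

Section Defs.
Variable R : realType.

Definition extv (k : nat) (v : 'cV[R]_k) (i : nat) : R :=
  match (insub i : option 'I_k) with Some i' => v i' 0 | None => 0 end.

Definition orthogonal (n : nat) (Q : 'M[R]_n) : Prop := Q *m Q^T = 1%:M.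

Definition nonincr (k : nat) (v : 'cV[R]_k) : Prop :=
  forall i j : 'I_k, (i <= j)%N -> v j 0 <= v i 0.

Definition in_A (L k : nat) (lam : R) (y a : 'cV[R]_k) : Prop :=
  forall i : 'I_k,
    a i 0 ^+ (2 * L).-1 - Num.sqrt lam * y i 0 * a i 0 ^+ L.-1 + lam * a i 0 = 0
    /\ 0 <= a i 0.

Definition in_B (L k : nat) (lam : R) (y sigma : 'cV[R]_k) (Pi : 'M[R]_k) : Prop :=
  is_perm_mx Pi /\ (exists a, in_A L lam y a /\ sigma = Pi *m a) /\ nonincr sigma.

Definition Sig (m n k : nat) (sigma : 'cV[R]_k) : 'M[R]_(m, n) :=
  \matrix_(i < m, j < n) (if (i : nat) == j then extv sigma i else 0).

Definition extP (n k : nat) (P : 'M[R]_k) : 'M[R]_n :=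
  \matrix_(i < n, j < n)
    match (insub (i : nat) : option 'I_k), (insub (j : nat) : option 'I_k) with
    | Some i', Some j' => P i' j'
    | _, _ => ((i : nat) == j)%:R
    end.

(* O is block diagonal w.r.t. the partition of indices given by the blocks
   (s_{k-1}, s_k], k = 1..p_Y, of equal positive y-values, and the last block
   (r_Y, n]: indices i, j lie in the same block iff y_i = y_j (y extended by 0). *)
Definition blkdiag_y (n k : nat) (y : 'cV[R]_k) (O : 'M[R]_n) : Prop :=
  forall i j : 'I_n, extv y i != extv y j -> O i j = 0.

(* Tuples W = (W_1,...,W_L) with L = n.+2; W l is the paper's W_{l+1}. *)
Definition Wtuple (n : nat) (d : nat -> nat) :=
  forall l : 'I_n.+2, 'M[R]_(d l.+1, d l).

(* Q k stands for the paper's Q_{k+1} \in O^{d_k}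
   (k = 1..L-1); O = BlkD(O_1,...,O_{p_Y+1}), Oh = BlkD(O_1,...,O_{p_Y},Oh_{p_Y+1}),
   so Oh^T = BlkD(O_1^T,...,O_{p_Y}^T,Oh_{p_Y+1}^T). *)
Definition Wset (n : nat) (d : nat -> nat) (k : nat) (y sigma : 'cV[R]_k)
    (Pi : 'M[R]_k) : set (Wtuple n d) :=
  [set W : Wtuple n d | exists (Q : forall m : nat, 'M[R]_(d m)) (O : 'M[R]_(d 0%N))
             (Oh : 'M[R]_(d n.+2)),
     (forall m : nat, (1 <= m <= n.+1)%N -> orthogonal (Q m)) /\
     orthogonal O /\ orthogonal Oh /\ blkdiag_y y O /\ blkdiag_y y Oh /\
     [/\
         (forall (i j : 'I_(d 0%N)) (i' j' : 'I_(d n.+2)),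
             i = i' :> nat -> j = j' :> nat -> 0 < extv y i -> O i j = Oh i' j'),
        
         W ord0 = Q 1%N *m Sig (d 1%N) (d 0%N) sigma *m extP (d 0%N) Pi *m O,
         (forall l : 'I_n.+2, (0 < l < n.+1)%N ->
             W l = Q l.+1 *m Sig (d l.+1) (d l) sigma *m (Q l)^T) &
         W ord_max = Oh^T *m extP (d n.+2) Pi^T *m Sig (d n.+2) (d n.+1) sigma
                       *m (Q n.+1)^T]].

Definition fro2 (p q : nat) (A : 'M[R]_(p, q)) : R := \sum_i \sum_j A i j ^+ 2.

Definition wdist (n : nat) (d : nat -> nat) (W W' : Wtuple n d) : R :=
  Num.sqrt (\sum_(l < n.+2) fro2 (W l - W' l)).

Definition setdist (n : nat) (d : nat -> nat) (X Y : set (Wtuple n d)) : R :=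
  inf [set r : R | exists W, X W /\ exists W', Y W' /\ r = wdist W W'].

Definition Yset (L k : nat) (lam : R) (y : 'cV[R]_k) : set R :=
  [set s : R | 0 <= s /\ exists i : 'I_k,
      s ^+ (2 * L).-1 + lam * s - Num.sqrt lam * y i 0 * s ^+ L.-1 = 0].

Definition delta_sigma (L k : nat) (lam : R) (y : 'cV[R]_k) : R :=
  inf [set r : R | exists x z, Yset L lam y x /\ Yset L lam y z /\ x != z
                               /\ r = `|x - z|].

End Defs.

(* Main.v *)
From Pilot Require Import Defs.
From HB Require Import structures.
From mathcomp Require Import all_boot all_order all_algebra.
From mathcomp Require Import boolp classical_sets reals.
From mathcomp Require Import ring lra.
From mathcomp Require Import fingroup perm.
Import Pilot.Defs.
Import Order.TTheory GRing.Theory Num.Theory.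
Local Open Scope ring_scope.
Set Implicit Arguments. Unset Strict Implicit. Unset Printing Implicit Defensive.

Lemma count_sum (T : eqType) k (f : 'I_k -> T) c :
  count_mem c [tuple f q | q < k] = (\sum_(q < k) (f q == c))%N.
Proof.
rewrite /= count_map -sum1_count big_mkcond /= big_enum /=.
by apply: eq_bigr => i _; case: (f i == c).
Qed.

Lemma count_fib (T : eqType) k (f g : 'I_k -> T) :
  (forall c, \sum_(q < k) (f q == c) = \sum_(q < k) (g q == c))%N ->
  exists tau : 'S_k, forall q, g (tau q) = f q.
Proof.
move=> H.
have : perm_eq [tuple f q | q < k] [tuple g q | q < k].
  by apply/allP => c _; apply/eqP; rewrite !count_sum.
case/tuple_permP => tau e; exists tau => q.
have e' : [tuple f q | q < k] = [tuple tnth [tuple g q | q < k] (tau i) | i < k] := val_inj e.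
by have := congr1 (fun t => tnth t q) e'; rewrite !tnth_mktuple => ->.
Qed.


Section Tau.
Variable R : realType.

Lemma root_uniq (lam x y1 y2 : R) (e f : nat) : 0 < lam -> 0 < x ->
  x ^+ e - Num.sqrt lam * y1 * x ^+ f + lam * x = 0 ->
  x ^+ e - Num.sqrt lam * y2 * x ^+ f + lam * x = 0 -> y1 = y2.
Proof.
move=> l0 x0 h1 h2.
have : Num.sqrt lam * x ^+ f * (y1 - y2) = 0.
  have -> : Num.sqrt lam * x ^+ f * (y1 - y2) =
    (x ^+ e - Num.sqrt lam * y2 * x ^+ f + lam * x) - (x ^+ e - Num.sqrt lam * y1 * x ^+ f + lam * x)
    by ring.
  by rewrite h1 h2 subrr.
move/eqP; rewrite mulf_eq0 => /orP [|]; last by rewrite subr_eq0 => /eqP.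
rewrite mulf_eq0 => /orP [|].
  by rewrite gt_eqF // sqrtr_gt0.
by rewrite gt_eqF // exprn_gt0.
Qed.

Lemma tau_exists (L k : nat) (lam : R) (y a a' sg : 'cV[R]_k) (s s' : 'S_k) :
  0 < lam -> in_A L lam y a -> in_A L lam y a' ->
  (forall q, sg q 0 = a (s q) 0) -> (forall q, sg q 0 = a' (s' q) 0) ->
  exists tau : 'S_k, forall q, sg (tau q) 0 = sg q 0 /\ y (s' (tau q)) 0 = y (s q) 0.
Proof.
move=> l0 hA hA' hs hs'.
have yeq q : sg q 0 != 0 -> y (s q) 0 = y (s' q) 0.
  move=> nz; have [e1 p1] := hA (s q); have [e2 p2] := hA' (s' q).
  have x0 : 0 < sg q 0 by rewrite lt_def nz /= hs.
  rewrite -hs in e1; rewrite -hs' in e2.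
  exact: root_uniq l0 x0 e1 e2.
suff [tau Ht] : exists tau : 'S_k, forall q, (sg (tau q) 0, y (s' (tau q)) 0) = (sg q 0, y (s q) 0).
  by exists tau => q; case: (Ht q) => -> ->.
apply: (@count_fib _ k (fun q => (sg q 0, y (s q) 0)) (fun q => (sg q 0, y (s' q) 0))) => -[v w].
have reix (t : 'S_k) (F : 'I_k -> nat) : (\sum_(q < k) F (t q) = \sum_(i < k) F i)%N.
  by rewrite [RHS](reindex_inj (@perm_inj _ t)).
case: (eqVneq v 0) => [->|nv]; last first.
  apply: eq_bigr => q _; rewrite !xpair_eqE.
  case: (eqVneq (sg q 0) v) => [e|]; last by [].
  by rewrite yeq // e.
have split_ (b : 'cV[R]_k) : (\sum_(i < k) (y i 0%R == w) =
   \sum_(i < k) ((b i 0%R == 0%R) && (y i 0%R == w)) + \sum_(i < k) ((b i 0%R != 0%R) && (y i 0%R == w)))%N.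
  by rewrite -big_split; apply: eq_bigr => i _; case: (b i 0%R == 0%R); case: (y i 0%R == w).
have E1 : (\sum_(q < k) ((sg q 0%R, y (s q) 0%R) == (0%R, w)) = \sum_(i < k) ((a i 0%R == 0%R) && (y i 0%R == w)))%N.
  rewrite -[RHS](reix s); apply: eq_bigr => q _; by rewrite xpair_eqE hs.
have E2 : (\sum_(q < k) ((sg q 0%R, y (s' q) 0%R) == (0%R, w)) = \sum_(i < k) ((a' i 0%R == 0%R) && (y i 0%R == w)))%N.
  rewrite -[RHS](reix s'); apply: eq_bigr => q _; by rewrite xpair_eqE hs'.
have X : (\sum_(i < k) ((a i 0%R != 0%R) && (y i 0%R == w)) = \sum_(i < k) ((a' i 0%R != 0%R) && (y i 0%R == w)))%N.
  rewrite -[LHS](reix s) -[RHS](reix s'); apply: eq_bigr => q _; rewrite -hs -hs'.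
  case: (eqVneq (sg q 0) 0) => //= nz; by rewrite yeq.
rewrite E1 E2; apply/eqP; rewrite -(eqn_add2r (\sum_(i < k) ((a i 0%R != 0%R) && (y i 0%R == w)))).
by rewrite -split_ X -split_.
Qed.

End Tau.

Section Abel.
Variable R : realType.

Lemma abelA (p : nat) (a r s : nat -> R) :
  (forall i j, (i <= j)%N -> (j < p)%N -> a j <= a i) ->
  (forall i, (i < p)%N -> 0 <= a i) ->
  (forall k, (k <= p)%N -> \sum_(i < k) r i <= \sum_(i < k) s i) ->
  \sum_(i < p) a i * r i <= \sum_(i < p) a i * s i.
Proof.
elim: p a => [|p IH] a Ha Hp Hk; first by rewrite !big_ord0.
rewrite -subr_ge0 -sumrB.
have -> : \sum_(i < p.+1) (a i * s i - a i * r i) =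
   \sum_(i < p) ((a i - a p) * s i - (a i - a p) * r i)
   + a p * \sum_(i < p.+1) (s i - r i).
  rewrite big_ord_recr /= mulr_sumr big_ord_recr /= addrA.
  rewrite [RHS]addrA -big_split /= -addrA; congr (_ + _); last by ring.
  by apply: eq_bigr => i _; ring.
apply: addr_ge0.
  rewrite sumrB subr_ge0; apply: (IH (fun i => a i - a p)).
  - by move=> i j ij jp; rewrite lerD2r; exact: Ha ij (ltnW jp).
  - by move=> i ip; rewrite subr_ge0; apply: Ha; [exact: ltnW|by []].
  - by move=> k kp; apply: Hk; apply: leqW.
apply: mulr_ge0; first exact: Hp.
by rewrite sumrB subr_ge0; apply: Hk.
Qed.


Lemma sum_ind (p k : nat) (F : nat -> R) : (k <= p)%N ->
  \sum_(j < p) F j * (j < k)%:R = \sum_(j < k) F j.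
Proof.
move=> kp; rewrite (big_ord_widen _ _ kp) [RHS]big_mkcond /=.
by apply: eq_bigr => j _; case: ifP => _; rewrite ?mulr1 ?mulr0.
Qed.

Lemma sum_part (p k : nat) (F : nat -> R) : (k <= p)%N ->
  (forall j, 0 <= F j) -> \sum_(j < k) F j <= \sum_(j < p) F j.
Proof.
move=> kp F0; rewrite (big_ord_widen _ _ kp) [X in X <= _]big_mkcond /=.
by apply: ler_sum => j _; case: ifP => _.
Qed.

Lemma abelD (p : nat) (a b : nat -> R) (D : nat -> nat -> R) :
  (forall i j, (i <= j)%N -> (j < p)%N -> a j <= a i) ->
  (forall i, (i < p)%N -> 0 <= a i) ->
  (forall i j, (i <= j)%N -> (j < p)%N -> b j <= b i) ->
  (forall i, (i < p)%N -> 0 <= b i) ->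
  (forall i j, 0 <= D i j) ->
  (forall i, (i < p)%N -> \sum_(j < p) D i j <= 1) ->
  (forall j, (j < p)%N -> \sum_(i < p) D i j <= 1) ->
  \sum_(i < p) \sum_(j < p) a i * b j * D i j <= \sum_(i < p) a i * b i.
Proof.
move=> Ha Ha0 Hb Hb0 D0 Hr Hc.
have -> : \sum_(i < p) \sum_(j < p) a i * b j * D i j =
          \sum_(i < p) a i * (\sum_(j < p) D i j * b j).
  by apply: eq_bigr => i _; rewrite mulr_sumr; apply: eq_bigr => j _; ring.
apply: (abelA (r := fun i => \sum_(j < p) D i j * b j) (s := b)) => // k kp.
have -> : \sum_(i < k) \sum_(j < p) D i j * b j =
          \sum_(j < p) b j * (\sum_(i < k) D i j).
  rewrite exchange_big /=; apply: eq_bigr => j _; rewrite mulr_sumr.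
  by apply: eq_bigr => i _; rewrite mulrC.
rewrite -(sum_ind b kp).
apply: (abelA (a := b) (r := fun j => \sum_(i < k) D i j) (s := fun j => (j < k)%:R)) => // l lp.
case: (leqP l k) => lk.
  have -> : \sum_(j < l) (j < k)%:R = \sum_(j < l) (1 : R).
    by apply: eq_bigr => j _; rewrite (leq_trans (ltn_ord j) lk).
  apply: ler_sum => j _.
  apply: le_trans (Hc j (leq_trans (ltn_ord j) lp)).
  exact: (@sum_part p k (fun i => D i j) kp).
have -> : \sum_(j < l) ((j < k)%:R : R) = \sum_(j < k) 1.
  rewrite -(sum_ind (fun _ => (1 : R)) (ltnW lk)).
  by apply: eq_bigr => j _; rewrite mul1r.
rewrite exchange_big /=; apply: ler_sum => i _.
apply: le_trans (Hr i (leq_trans (ltn_ord i) kp)).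
exact: (@sum_part p l (fun j => D i j) lp).
Qed.

End Abel.

Section Mat.
Variable R : realType.

Definition Emb (n p : nat) : 'M[R]_(n, p) := \matrix_(i < n, l < p) ((i : nat) == l)%:R.

Lemma EtM n p q (pn : (p <= n)%N) (M : 'M[R]_(n, q)) l b :
  ((Emb n p)^T *m M) l b = M (widen_ord pn l) b.
Proof.
rewrite !mxE (bigD1 (widen_ord pn l)) //= !mxE eqxx mul1r big1 ?addr0 // => i ne.
rewrite !mxE; case: eqP => [h|]; last by rewrite mul0r.
by case/eqP: ne; apply: val_inj; rewrite /= h.
Qed.

Lemma MEt n p q (pn : (p <= n)%N) (M : 'M[R]_(q, n)) a l :
  (M *m Emb n p) a l = M a (widen_ord pn l).
Proof.
rewrite !mxE (bigD1 (widen_ord pn l)) //= !mxE eqxx mulr1 big1 ?addr0 // => i ne.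
rewrite !mxE; case: eqP => [h|]; last by rewrite mulr0.
by case/eqP: ne; apply: val_inj; rewrite /= h.
Qed.

Lemma EmM n p q (M : 'M[R]_(p, q)) (i : 'I_n) b :
  (Emb n p *m M) i b = match (insub (i : nat) : option 'I_p) with Some l => M l b | None => 0 end.
Proof.
rewrite !mxE; case: insubP => [l _ il|ni].
  rewrite (bigD1 l) //= !mxE il eqxx mul1r big1 ?addr0 // => j ne.
  rewrite !mxE; case: eqP => [h|]; last by rewrite mul0r.
  by case/eqP: ne; apply: val_inj; rewrite /= -h.
rewrite big1 // => j _; rewrite !mxE; case: eqP => [h|]; last by rewrite mul0r.
by move: ni; rewrite h ltn_ord.
Qed.

Lemma MEtT n p q (M : 'M[R]_(q, p)) a (j : 'I_n) :
  (M *m (Emb n p)^T) a j = match (insub (j : nat) : option 'I_p) with Some l => M a l | None => 0 end.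
Proof.
rewrite -[M *m _]trmxK trmx_mul trmxK [LHS]mxE EmM.
by case: insubP => [l _ _|_]; rewrite ?mxE.
Qed.

Lemma EtE n p (pn : (p <= n)%N) : (Emb n p)^T *m Emb n p = 1%:M.
Proof.
by apply/matrixP => l l'; rewrite EtM !mxE.
Qed.

Lemma extvE k (v : 'cV[R]_k) (i : 'I_k) : extv v i = v i 0.
Proof. by rewrite /extv valK. Qed.

Lemma SigE m k p (sg : 'cV[R]_p) :
  Sig m k sg = Emb m p *m diag_mx sg^T *m (Emb k p)^T.
Proof.
apply/matrixP => i j; rewrite [LHS]mxE MEtT /extv.
case: (insubP _ (j : nat)) => [l _ jl|nj].
  rewrite EmM; case: (insubP _ (i : nat)) => [l' _ il'|ni].
    rewrite !mxE -il' -jl (_ : (\val l' == \val l) = (l' == l)) //.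
    by case: (l' == l); rewrite ?mulr1n ?mulr0n.
  by case: eqP.
case: eqP => // e; case: insubP => // l _ il; move: nj; by rewrite -e -il ltn_ord.
Qed.

Lemma extPE n p (T : 'M[R]_p) :
  extP n T = Emb n p *m T *m (Emb n p)^T + (1%:M - Emb n p *m (Emb n p)^T).
Proof.
apply/matrixP => i j; rewrite [LHS]mxE [RHS]mxE MEtT.
rewrite [X in _ + X]mxE [X in _ + (_ + X)]mxE [X in _ + (X + _)]mxE MEtT.
case: (insubP _ (j : nat)) => [l' _ jl'|nj].
  rewrite EmM !mxE; case: (insubP _ (i : nat)) => [l _ il|ni].
    rewrite (_ : (i == j) = ((i : nat) == (j : nat))) // -il -jl'.
    by rewrite subrr addr0.
  rewrite (_ : (i == j) = ((i : nat) == (j : nat))) // -jl' subrr add0r.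
  by case: eqP => // e; move: ni; rewrite e ltn_ord.
rewrite add0r subr0.
by case: insubP => [l _ il|ni]; rewrite ?mxE.
Qed.

Section ExtP.
Variables (n p : nat) (pn : (p <= n)%N).
Local Notation E := (Emb n p).

Lemma EtE' : E^T *m E = 1%:M. Proof. exact: EtE. Qed.

Lemma XP (A : 'M[R]_p) : E *m A *m E^T *m (E *m E^T) = E *m A *m E^T.
Proof. by rewrite mulmxA -(mulmxA _ E^T) EtE' mulmx1. Qed.

Lemma PX (A : 'M[R]_p) : E *m E^T *m (E *m A *m E^T) = E *m A *m E^T.
Proof. by rewrite !mulmxA -(mulmxA E E^T) EtE' mulmx1. Qed.

Lemma XY (A B : 'M[R]_p) : E *m A *m E^T *m (E *m B *m E^T) = E *m (A *m B) *m E^T.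
Proof. by rewrite !mulmxA -(mulmxA _ E^T E) EtE' mulmx1. Qed.

Lemma PP : E *m E^T *m (E *m E^T) = E *m E^T.
Proof. by rewrite mulmxA -(mulmxA E E^T) EtE' mulmx1. Qed.

Lemma extP_mul (A B : 'M[R]_p) : extP n A *m extP n B = extP n (A *m B).
Proof.
rewrite !extPE mulmxDl !mulmxDr XY !mulmxN !mulmx1 XP !mulmxBl !mul1mx PX PP.
by rewrite !subrr !addr0 add0r subr0.
Qed.

Lemma extP1 : extP n (1%:M : 'M[R]_p) = 1%:M.
Proof. by rewrite extPE mulmx1 addrC subrK. Qed.

Lemma extP_tr (A : 'M[R]_p) : (extP n A)^T = extP n A^T.
Proof.
rewrite !extPE linearD /= linearB /= trmx1 !trmx_mul trmxK.
by rewrite mulmxA.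
Qed.

Lemma extP_orth (A : 'M[R]_p) : orthogonal A -> orthogonal (extP n A).
Proof. by rewrite /orthogonal extP_tr extP_mul => ->; rewrite extP1. Qed.

Lemma extP_E (A : 'M[R]_p) : extP n A *m E = E *m A.
Proof.
rewrite extPE mulmxDl mulmxBl mul1mx -!mulmxA EtE' !mulmx1.
by rewrite subrr addr0.
Qed.

Lemma Et_extP (A : 'M[R]_p) : E^T *m extP n A = A *m E^T.
Proof.
rewrite extPE mulmxDr mulmxBr mulmx1 !mulmxA EtE' !mul1mx.
by rewrite subrr addr0.
Qed.

End ExtP.

Lemma extP_Sig m k p (pm : (p <= m)%N) (pk : (p <= k)%N) (T : 'M[R]_p) (sg : 'cV[R]_p) :
  T *m diag_mx sg^T = diag_mx sg^T *m T ->
  extP m T *m Sig m k sg = Sig m k sg *m extP k T.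
Proof.
move=> TD; rewrite !SigE !mulmxA (extP_E pm) -!mulmxA (Et_extP pk) !mulmxA.
by rewrite -(mulmxA (Emb m p)) TD mulmxA.
Qed.

Lemma orthT n (Q : 'M[R]_n) : orthogonal Q -> Q^T *m Q = 1%:M.
Proof. exact: mulmx1C. Qed.

Lemma orthM n (A B : 'M[R]_n) : orthogonal A -> orthogonal B -> orthogonal (A *m B).
Proof.
rewrite /orthogonal => hA hB; rewrite trmx_mul mulmxA -(mulmxA A) hB mulmx1 //.
Qed.

Lemma orth_tr n (A : 'M[R]_n) : orthogonal A -> orthogonal A^T.
Proof. by move=> h; rewrite /orthogonal trmxK orthT. Qed.

Lemma orth_perm n (s : 'S_n) : orthogonal (perm_mx s : 'M[R]_n).
Proof. by rewrite /orthogonal tr_perm_mx -perm_mxM mulgV perm_mx1. Qed.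

Lemma fro2E p q (M : 'M[R]_(p, q)) : fro2 M = \tr (M *m M^T).
Proof.
rewrite /fro2 /mxtrace; apply: eq_bigr => i _; rewrite mxE.
by apply: eq_bigr => j _; rewrite mxE expr2.
Qed.

Lemma trAAt m k (S : 'M[R]_(m, k)) U V : orthogonal U -> orthogonal V ->
  \tr ((U *m S *m V) *m (U *m S *m V)^T) = \tr (S *m S^T).
Proof.
move=> oU oV; rewrite !trmx_mul !mulmxA -(mulmxA _ V) oV mulmx1.
rewrite -!mulmxA mxtrace_mulC -!mulmxA.
by rewrite (orthT oU) mulmx1.
Qed.

Lemma trSSt m k p (pm : (p <= m)%N) (pk : (p <= k)%N) (sg : 'cV[R]_p) :
  \tr (Sig m k sg *m (Sig m k sg)^T) = \sum_(i < p) sg i 0 ^+ 2.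
Proof.
rewrite SigE !trmx_mul trmxK tr_diag_mx !mulmxA -(mulmxA _ (Emb k p)^T) (EtE pk) mulmx1.
rewrite -!mulmxA mxtrace_mulC -!mulmxA (EtE pm) mulmx1 mulmx_diag mxtrace_diag.
by apply: eq_bigr => i _; rewrite !mxE expr2.
Qed.

Lemma trcross m k p (sg sg' : 'cV[R]_p) (U U' : 'M[R]_m) (V V' : 'M[R]_k) :
  \tr ((U *m Sig m k sg *m V) *m (U' *m Sig m k sg' *m V')^T) =
  \tr (diag_mx sg^T *m ((Emb k p)^T *m (V *m V'^T) *m Emb k p) *m diag_mx sg'^T
        *m ((Emb m p)^T *m (U'^T *m U) *m Emb m p)).
Proof.
rewrite !SigE !trmx_mul !trmxK !tr_diag_mx.
rewrite -!mulmxA mxtrace_mulC -!mulmxA mxtrace_mulC !mulmxA.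
done.
Qed.

Lemma trDYDW p (sg sg' : 'cV[R]_p) (Y W : 'M[R]_p) :
  \tr (diag_mx sg^T *m Y *m diag_mx sg'^T *m W) =
  \sum_(i < p) \sum_(j < p) sg i 0 * Y i j * sg' j 0 * W j i.
Proof.
rewrite /mxtrace; apply: eq_bigr => i _; rewrite mxE; apply: eq_bigr => j _.
by rewrite mul_mx_diag mul_diag_mx !mxE.
Qed.

Lemma sum_widen k p (pk : (p <= k)%N) (G : 'I_k -> R) : (forall b, 0 <= G b) ->
  \sum_(j < p) G (widen_ord pk j) <= \sum_(b < k) G b.
Proof.
move=> G0.
pose G' n := match (insub n : option 'I_k) with Some b => G b | None => 0 end.
have -> : \sum_(j < p) G (widen_ord pk j) = \sum_(j < p) G' j.
  apply: eq_bigr => j _; rewrite /G'; case: insubP => [u _ uj|nj].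
    by congr G; apply: val_inj; rewrite /= uj.
  by move: nj; rewrite (leq_trans (ltn_ord j) pk).
have -> : \sum_(b < k) G b = \sum_(b < k) G' b.
  by apply: eq_bigr => b _; rewrite /G' valK.
apply: sum_part => // n; rewrite /G'; case: insubP => // *.
Qed.

Lemma orth_rows k p (pk : (p <= k)%N) (Z : 'M[R]_k) : orthogonal Z ->
  (forall i : 'I_p, \sum_(j < p) Z (widen_ord pk i) (widen_ord pk j) ^+ 2 <= 1) /\
  (forall i : 'I_p, \sum_(j < p) Z (widen_ord pk j) (widen_ord pk i) ^+ 2 <= 1).
Proof.
move=> oZ; have oZ' := orthT oZ; rewrite /orthogonal in oZ; split => i.
  have h := @sum_widen k p pk (fun b => Z (widen_ord pk i) b ^+ 2) (fun b => sqr_ge0 _).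
  apply: le_trans h _.
  have := congr1 (fun M : 'M[R]_k => M (widen_ord pk i) (widen_ord pk i)) oZ.
  rewrite /= !mxE eqxx /= => h.
  rewrite (_ : \sum_(b < k) _ = \sum_(j < k) Z (widen_ord pk i) j * Z^T j (widen_ord pk i)) ?h //.
  by rewrite -h; apply: eq_bigr => b _; rewrite mxE expr2.
have h := @sum_widen k p pk (fun b => Z b (widen_ord pk i) ^+ 2) (fun b => sqr_ge0 _).
apply: le_trans h _.
have := congr1 (fun M : 'M[R]_k => M (widen_ord pk i) (widen_ord pk i)) oZ'.
rewrite /= !mxE eqxx /= => h0.
rewrite (_ : \sum_(b < k) _ = \sum_(j < k) Z^T (widen_ord pk i) j * Z j (widen_ord pk i)) ?h0 //.
by rewrite -h0; apply: eq_bigr => b _; rewrite mxE expr2.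
Qed.

Definition lift2 p (M : 'M[R]_p) (n l : nat) : R :=
  match (insub n : option 'I_p), (insub l : option 'I_p) with
  | Some i, Some j => M i j | _, _ => 0 end.

Lemma lift2E p (M : 'M[R]_p) (i j : 'I_p) : lift2 M i j = M i j.
Proof. by rewrite /lift2 !valK. Qed.

Lemma extv_nonincr p (v : 'cV[R]_p) : nonincr v ->
  forall i j, (i <= j)%N -> (j < p)%N -> extv v j <= extv v i.
Proof.
move=> H i j ij jp; have ip := leq_ltn_trans ij jp.
by rewrite -[j]/(nat_of_ord (Ordinal jp)) -[i]/(nat_of_ord (Ordinal ip)) !extvE; apply: H.
Qed.

Lemma extv_ge0 p (v : 'cV[R]_p) : (forall i, 0 <= v i 0) -> forall i, 0 <= extv v i.
Proof. by move=> H i; rewrite /extv; case: insubP. Qed.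

Lemma mirsky m k p (pm : (p <= m)%N) (pk : (p <= k)%N) (sg sg' : 'cV[R]_p)
    (U U' : 'M[R]_m) (V V' : 'M[R]_k) :
  orthogonal U -> orthogonal U' -> orthogonal V -> orthogonal V' ->
  nonincr sg -> nonincr sg' -> (forall i, 0 <= sg i 0) -> (forall i, 0 <= sg' i 0) ->
  \sum_(i < p) (sg i 0 - sg' i 0) ^+ 2 <=
  fro2 (U *m Sig m k sg *m V - U' *m Sig m k sg' *m V').
Proof.
move=> oU oU' oV oV' nsg nsg' sg0 sg0'.
set A := U *m _ *m V; set B := U' *m _ *m V'.
have key : \tr (A *m B^T) <= \sum_(i < p) sg i 0 * sg' i 0.
  rewrite /A /B trcross trDYDW.
  set Z := V *m V'^T; set X := U'^T *m U.
  have oZ : orthogonal Z by apply: orthM => //; apply: orth_tr.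
  have oX : orthogonal X by apply: orthM => //; apply: orth_tr.
  set Y := (Emb k p)^T *m Z *m Emb k p; set W := (Emb m p)^T *m X *m Emb m p.
  have YE i j : Y i j = Z (widen_ord pk i) (widen_ord pk j) by rewrite /Y MEt EtM.
  have WE i j : W i j = X (widen_ord pm i) (widen_ord pm j) by rewrite /W MEt EtM.
  pose D n l := (lift2 Y n l ^+ 2 + lift2 W l n ^+ 2) / 2.
  apply: le_trans (_ : _ <= \sum_(i < p) \sum_(j < p) extv sg i * extv sg' j * D i j) _.
    apply: ler_sum => i _; apply: ler_sum => j _.
    rewrite /D !extvE !lift2E.
    have h1 := mulr_ge0 (sg0 i) (sg0' j).
    have h2 : 0 <= (Y i j - W j i) ^+ 2 := sqr_ge0 _.
    nra.
  have -> : \sum_(i < p) sg i 0 * sg' i 0 = \sum_(i < p) extv sg i * extv sg' i.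
    by apply: eq_bigr => i _; rewrite !extvE.
  apply: abelD.
  - exact: extv_nonincr.
  - by move=> i _; apply: extv_ge0.
  - exact: extv_nonincr.
  - by move=> i _; apply: extv_ge0.
  - by move=> i j; rewrite /D; apply: divr_ge0 => //; apply: addr_ge0; apply: sqr_ge0.
  - move=> i ip; rewrite -[i]/(nat_of_ord (Ordinal ip)).
    have -> : \sum_(j < p) D (Ordinal ip) j =
      (\sum_(j < p) Z (widen_ord pk (Ordinal ip)) (widen_ord pk j) ^+ 2
       + \sum_(j < p) X (widen_ord pm j) (widen_ord pm (Ordinal ip)) ^+ 2) / 2.
      rewrite -big_split mulr_suml; apply: eq_bigr => j _.
      by rewrite /D !lift2E YE WE.
    have := (orth_rows pk oZ).1 (Ordinal ip); have := (orth_rows pm oX).2 (Ordinal ip).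
    lra.
  - move=> j jp; rewrite -[j]/(nat_of_ord (Ordinal jp)).
    have -> : \sum_(i < p) D i (Ordinal jp) =
      (\sum_(i < p) Z (widen_ord pk i) (widen_ord pk (Ordinal jp)) ^+ 2
       + \sum_(i < p) X (widen_ord pm (Ordinal jp)) (widen_ord pm i) ^+ 2) / 2.
      rewrite -big_split mulr_suml; apply: eq_bigr => i _.
      by rewrite /D !lift2E YE WE.
    have := (orth_rows pk oZ).2 (Ordinal jp); have := (orth_rows pm oX).1 (Ordinal jp).
    lra.
rewrite fro2E linearB /= mulmxBl !mulmxBr !raddfB /=.
have -> : \tr (B *m A^T) = \tr (A *m B^T).
  by rewrite -[B *m A^T]trmxK trmx_mul trmxK mxtrace_tr.
rewrite /A /B !trAAt // !trSSt //.
have -> : \sum_(i < p) (sg i 0 - sg' i 0) ^+ 2 =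
  \sum_(i < p) sg i 0 ^+ 2 + \sum_(i < p) sg' i 0 ^+ 2 - 2 * \sum_(i < p) sg i 0 * sg' i 0.
  rewrite mulr_sumr -big_split -sumrB /=; apply: eq_bigr => i _; ring.
move: key; rewrite /A /B; lra.
Qed.

End Mat.

Section Main.
Variable R : realType.

Lemma perm_entry k (s : 'S_k) (a : 'cV[R]_k) q : (perm_mx s *m a) q 0 = a (s q) 0.
Proof. by rewrite -row_permE mxE. Qed.

Lemma perm_mxE' k (s : 'S_k) i j : (perm_mx s : 'M[R]_k) i j = (s i == j)%:R.
Proof. by rewrite /perm_mx !mxE. Qed.

Lemma blk_mul n k (y : 'cV[R]_k) (A B : 'M[R]_n) :
  blkdiag_y y A -> blkdiag_y y B -> blkdiag_y y (A *m B).
Proof.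
move=> hA hB i j ne; rewrite mxE big1 // => l _.
case: (eqVneq (extv y i) (extv y l)) => e.
  by rewrite hB ?mulr0 // -e.
by rewrite hA ?mul0r.
Qed.

Lemma blk_extP n k (y : 'cV[R]_k) (G : 'M[R]_k) :
  (forall i l : 'I_k, G i l != 0 -> y l 0 = y i 0) -> blkdiag_y y (extP n G).
Proof.
move=> hG i j; rewrite /extv mxE.
case: (insubP _ (i : nat)) => [i' _ ii|ni]; case: (insubP _ (j : nat)) => [j' _ jj|nj] ne.
- by apply/eqP; apply: contraR ne => /hG ->.
- case: eqP => // e; move: nj; by rewrite -e -ii ltn_ord.
- case: eqP => // e; move: ni; by rewrite e -jj ltn_ord.
- by move: ne; rewrite eqxx.
Qed.

Lemma extP_row n k (kn : (k <= n)%N) q (G : 'M[R]_k) (O : 'M[R]_(n, q))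
   (i : 'I_n) (i' : 'I_k) j :
  (i : nat) = i' -> (extP n G *m O) i j = \sum_(l < k) G i' l * O (widen_ord kn l) j.
Proof.
move=> e; rewrite extPE mulmxDl mulmxBl mul1mx -!mulmxA.
rewrite [LHS]mxE [X in _ + X]mxE [X in _ + (_ + X)]mxE !EmM.
have -> : (insub (i : nat) : option 'I_k) = Some i' by rewrite e valK.
rewrite EtM (_ : widen_ord kn i' = i); last by apply: val_inj.
rewrite subrr addr0 mxE; apply: eq_bigr => l _; by rewrite EtM.
Qed.

Lemma Wsub n d k (lam : R) (y sg : 'cV[R]_k) Pi Pi' :
  (forall l, (l <= n.+2)%N -> (k <= d l)%N) -> 0 < lam ->
  in_B n.+2 lam y sg Pi -> in_B n.+2 lam y sg Pi' ->
  forall W, @Wset R n d k y sg Pi W -> @Wset R n d k y sg Pi' W.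
Proof.
move=> kd l0 [pP [[a [hA ea]] nsg]] [pP' [[a' [hA' ea']] _]] W.
move=> [Q [O [Oh [oQ [oO [oOh [bO [bOh [cpl e0 em eL]]]]]]]]].
case/is_perm_mxP: pP => s es; case/is_perm_mxP: pP' => s' es'.
have hs q : sg q 0 = a (s q) 0 by rewrite ea es perm_entry.
have hs' q : sg q 0 = a' (s' q) 0 by rewrite ea' es' perm_entry.
have [tau Ht] := tau_exists l0 hA hA' hs hs'.
pose T : 'M[R]_k := perm_mx tau.
pose G := Pi'^T *m T^T *m Pi.
have oT : orthogonal T by apply: orth_perm.
have oPi : orthogonal Pi by rewrite es; apply: orth_perm.
have oPi' : orthogonal Pi' by rewrite es'; apply: orth_perm.
have oG : orthogonal G by apply: orthM => //; apply: orthM; apply: orth_tr.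
have TD : T *m diag_mx sg^T = diag_mx sg^T *m T.
  apply/matrixP => q r; rewrite mul_mx_diag mul_diag_mx !mxE.
  case: (eqVneq (tau q) r) => [<-|_]; last by rewrite mulr0 mul0r.
  by rewrite (Ht q).1 mulrC.
have TtD : T^T *m diag_mx sg^T = diag_mx sg^T *m T^T.
  by rewrite -[diag_mx _]tr_diag_mx -!trmx_mul TD.
have Gblk : forall i l : 'I_k, G i l != 0 -> y l 0 = y i 0.
  move=> i l; rewrite /G es es' /T !tr_perm_mx -!perm_mxM perm_mxE' !permM.
  have [<- _|ne] := eqVneq (s (tau^-1%g (s'^-1%g i))) l; last by rewrite eqxx.
  by rewrite -(Ht _).2 permKV permKV.
have k0 : (k <= d 0)%N by apply: kd.
have kL : (k <= d n.+2)%N by apply: kd.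
exists (fun m => Q m *m extP (d m) T), (extP (d 0) G *m O), (extP (d n.+2) G *m Oh).
split.
  move=> m hm; apply: orthM; first exact: oQ.
  apply: extP_orth => //; apply: kd; case/andP: hm => _ h; exact: leqW.
split; first by apply: orthM => //; apply: extP_orth.
split; first by apply: orthM => //; apply: extP_orth.
split; first by apply: blk_mul => //; apply: blk_extP.
split; first by apply: blk_mul => //; apply: blk_extP.
split.
- move=> i j i' j' ii jj yp.
  have ik : (i < k)%N.
    move: yp; rewrite /extv; case: insubP => [u _ <- _|_]; [exact: ltn_ord | by rewrite ltxx].
  rewrite (@extP_row _ _ k0 _ G O i (Ordinal ik) j) // (@extP_row _ _ kL _ G Oh i' (Ordinal ik) j') -?ii //.
  apply: eq_bigr => l _.
  case: (eqVneq (G (Ordinal ik) l) 0) => [->|nz]; first by rewrite !mul0r.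
  congr (_ * _); apply: cpl => //.
  by rewrite extvE (Gblk _ _ nz) -extvE.
- rewrite e0 -!mulmxA; congr (_ *m _).
  rewrite [RHS]mulmxA (extP_Sig (kd 1%N isT) k0 TD) -mulmxA; congr (_ *m _).
  rewrite !mulmxA !extP_mul //; congr (extP _ _ *m _).
  rewrite /G !mulmxA -(mulmxA T Pi') oPi' mulmx1 oT mul1mx //.
- move=> l hl; rewrite em // trmx_mul -!mulmxA; congr (_ *m _).
  case/andP: hl => l1 l2.
  have kl : (k <= d l)%N by apply: kd; apply: leq_trans (ltnW l2) _.
  have kl1 : (k <= d l.+1)%N by apply: kd.
  rewrite [RHS]mulmxA (extP_Sig kl1 kl TD) -mulmxA; congr (_ *m _).
  by rewrite mulmxA (extP_orth kl oT) mul1mx.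
- rewrite eL !trmx_mul -!mulmxA; congr (_ *m _).
  have kn1 : (k <= d n.+1)%N by apply: kd.
  rewrite !extP_tr [X in _ = _ *m (_ *m X)]mulmxA -(extP_Sig kL kn1 TtD).
  rewrite !mulmxA !extP_mul //; congr (extP _ _ *m _ *m _).
  rewrite /G !trmx_mul !trmxK -!mulmxA (mulmxA Pi') oPi' mul1mx.
  by rewrite oT mulmx1.
Qed.

End Main.

Section Final.
Variable R : realType.
Local Open Scope classical_set_scope.

Definition W0 n (d : nat -> nat) k (sg : 'cV[R]_k) (Pi : 'M[R]_k) : Wtuple R n d :=
  fun l => (if (l : nat) == n.+1 then extP (d l.+1) Pi^T else 1%:M)
           *m Sig (d l.+1) (d l) sg *m (if (l : nat) == 0%N then extP (d l) Pi else 1%:M).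

Lemma orth1 m : orthogonal (1%:M : 'M[R]_m).
Proof. by rewrite /orthogonal trmx1 mulmx1. Qed.

Lemma blk1 m k (y : 'cV[R]_k) : blkdiag_y y (1%:M : 'M[R]_m).
Proof. move=> i j ne; rewrite mxE; case: eqP => // e; by move: ne; rewrite e eqxx. Qed.

Lemma W0_in n d k (y sg : 'cV[R]_k) Pi : @Wset R n d k y sg Pi (@W0 n d k sg Pi).
Proof.
exists (fun _ => 1%:M), 1%:M, 1%:M.
split; first by move=> *; apply: orth1.
split; first exact: orth1.
split; first exact: orth1.
split; first exact: blk1.
split; first exact: blk1.
split.
- move=> i j i' j' ii jj _; rewrite !mxE.
  by rewrite (_ : (i == j) = ((i : nat) == j)) // (_ : (i' == j') = ((i' : nat) == j')) // ii jj.
- by rewrite /W0 /= mul1mx mulmx1.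
- move=> l /andP [l1 l2]; rewrite /W0 trmx1 !mulmx1 mul1mx.
  rewrite (_ : ((l : nat) == n.+1) = false); last by apply/negbTE; rewrite neq_ltn l2.
  by rewrite (_ : ((l : nat) == 0%N) = false) ?mul1mx ?mulmx1 //; apply/negbTE; rewrite -lt0n.
- by rewrite /W0 /= eqxx !trmx1 !mul1mx !mulmx1.
Qed.

Lemma sg_ge0 L k (lam : R) (y sg : 'cV[R]_k) Pi : in_B L lam y sg Pi -> forall i, 0 <= sg i 0.
Proof.
move=> [pP [[a [hA ea]] _]] i; case/is_perm_mxP: pP => s es.
by rewrite ea es perm_entry; case: (hA (s i)).
Qed.

Lemma sg_Y L k (lam : R) (y sg : 'cV[R]_k) Pi : in_B L lam y sg Pi -> forall i, Yset L lam y (sg i 0).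
Proof.
move=> [pP [[a [hA ea]] _]] i; case/is_perm_mxP: pP => s es.
rewrite ea es perm_entry; case: (hA (s i)) => e h; split => //.
by exists (s i); rewrite addrAC.
Qed.

Lemma dist0 n d k (y sg sg' : 'cV[R]_k) Pi Pi' (lam : R) :
  (forall l, (l <= n.+2)%N -> (k <= d l)%N) ->
  in_B n.+2 lam y sg Pi -> in_B n.+2 lam y sg' Pi' ->
  forall W W', @Wset R n d k y sg Pi W -> @Wset R n d k y sg' Pi' W' ->
  \sum_(i < k) (sg i 0 - sg' i 0) ^+ 2 <= fro2 (W ord0 - W' ord0).
Proof.
move=> kd hB hB' W W' [Q [O [Oh [oQ [oO [_ [_ [_ [_ e0 _ _]]]]]]]]]
  [Q' [O' [Oh' [oQ' [oO' [_ [_ [_ [_ e0' _ _]]]]]]]]].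
have k0 : (k <= d 0)%N by apply: kd.
have k1 : (k <= d 1)%N by apply: kd.
have [pP _] := hB; have [pP' _] := hB'.
case/is_perm_mxP: pP => s es; case/is_perm_mxP: pP' => s' es'.
rewrite e0 e0' -!(mulmxA _ _ O) -!(mulmxA _ _ O').
apply: mirsky => //.
- exact: oQ.
- exact: oQ'.
- by apply: orthM => //; apply: extP_orth => //; rewrite es; apply: orth_perm.
- by apply: orthM => //; apply: extP_orth => //; rewrite es'; apply: orth_perm.
- by case: hB => _ [].
- by case: hB' => _ [].
- exact: sg_ge0 hB.
- exact: sg_ge0 hB'.
Qed.

Lemma fro2_ge0 p q (M : 'M[R]_(p, q)) : 0 <= fro2 M.
Proof. by apply: sumr_ge0 => i _; apply: sumr_ge0 => j _; apply: sqr_ge0. Qed.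

Lemma diff_idx k (sg sg' : 'cV[R]_k) : sg != sg' -> exists i, sg i 0 != sg' i 0.
Proof.
move=> ne; case: (boolP [exists i, sg i 0 != sg' i 0]) => [/existsP //|/existsPn h].
exfalso; move/eqP: ne; apply; apply/matrixP => i j; rewrite (ord1 j).
by move: (h i); rewrite negbK => /eqP.
Qed.

End Final.

Lemma sq_le_sum (R : realType) k (F : 'I_k -> R) j : F j ^+ 2 <= \sum_i F i ^+ 2.
Proof.
rewrite (bigD1 j) //= lerDl; apply: sumr_ge0 => *; apply: sqr_ge0.
Qed.

Lemma fro2_0 (R : realType) p q : fro2 (0 : 'M[R]_(p, q)) = 0.
Proof. by rewrite /fro2 big1 // => i _; rewrite big1 // => j _; rewrite mxE expr0n. Qed.

Local Open Scope classical_set_scope.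

Theorem proposition3p3 (R : realType) (n : nat) (d : nat -> nat) (lam : R)
    (y sigma sigma' : 'cV[R]_(minn (d 0%N) (d n.+2)))
    (Pi Pi' : 'M[R]_(minn (d 0%N) (d n.+2))) :
  (forall l : nat, (l <= n.+2)%N -> (0 < d l)%N) ->
  0 < lam ->
  nonincr y -> (forall i, 0 <= y i 0) ->
  (forall l : nat, (1 <= l <= n.+1)%N -> (minn (d 0%N) (d n.+2) <= d l)%N) ->
  in_B n.+2 lam y sigma Pi -> in_B n.+2 lam y sigma' Pi' ->
  (@Wset R n d _ y sigma Pi = @Wset R n d _ y sigma' Pi' <-> sigma = sigma') /\
  (sigma != sigma' ->
     delta_sigma n.+2 lam y <= setdist (@Wset R n d _ y sigma Pi) (@Wset R n d _ y sigma' Pi')).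
Proof.
move=> dpos l0 ny y0 hmid hB hB'.
have kd : forall l, (l <= n.+2)%N -> (minn (d 0%N) (d n.+2) <= d l)%N.
  move=> l hl; case: l hl => [|l] hl; first exact: geq_minl.
  case: (ltngtP l.+1 n.+2) => [lt|gt|->]; last exact: geq_minr.
    by apply: hmid; apply/andP; split.
  by move: gt; rewrite ltnNge hl.
have key := dist0 kd hB hB'.
split.
  split.
    move=> eW; apply/eqP; apply: contraT => ne.
    have [i hi] := diff_idx ne.
    have w0 := @W0_in R n d _ y sigma Pi.
    have w0' : @Wset R n d _ y sigma' Pi' (@W0 R n d _ sigma Pi) by rewrite -eW.
    have := key _ _ w0 w0'; rewrite subrr fro2_0 => h.
    have h2 := le_trans (@sq_le_sum R _ (fun q => sigma q 0 - sigma' q 0) i) h.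
    have : (sigma i 0 - sigma' i 0) ^+ 2 = 0 by apply/eqP; rewrite eq_le h2 sqr_ge0.
    move/eqP; rewrite sqrf_eq0 subr_eq0 => e.
    by move: hi; rewrite e.
  move=> e; rewrite -e in hB' *.
  apply/seteqP; split => W; [have h := Wsub kd l0 hB hB' | have h := Wsub kd l0 hB' hB]; exact: h.
move=> ne; have [i hi] := diff_idx ne.
apply: (@le_trans _ _ `|sigma i 0 - sigma' i 0|).
  rewrite /delta_sigma; apply: ge_inf.
    by exists 0 => r [x [z [_ [_ [_ ->]]]]]; apply: normr_ge0.
  exists (sigma i 0), (sigma' i 0).
  split; first exact: sg_Y hB i.
  by split; [exact: sg_Y hB' i | split].
apply: lb_le_inf.
  exists (wdist (@W0 R n d _ sigma Pi) (@W0 R n d _ sigma' Pi')).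
  exists (@W0 R n d _ sigma Pi); split; first exact: W0_in.
  by exists (@W0 R n d _ sigma' Pi'); split; first exact: W0_in.
move=> r [W [hW [W' [hW' ->]]]].
rewrite /wdist -sqrtr_sqr; apply: ler_wsqrtr.
apply: le_trans (@sq_le_sum R _ (fun q => sigma q 0 - sigma' q 0) i) _.
apply: le_trans (key _ _ hW hW') _.
rewrite (bigD1 ord0) //= lerDl; apply: sumr_ge0 => *; apply: fro2_ge0.
Qed.
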